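(* Let $\mathscr X=[0,1]^4$ with the Euclidean norm $\|\cdot\|_2$. Let $\mathbf x_1=(1/2,1/2,1/2,1/2)$ and, for $n\ge1$, let $\mathbf x_{n+1}$ be any point of $\mathrm{Arg}\max_{\mathbf x\in\mathscr X}\min_{1\le i\le n}\|\mathbf x-\mathbf x_i\|_2$, with $\mathbf X_n=\{\mathbf x_1,\ldots,\mathbf x_n\}$. Let $n_m=(2^m+1)^4+2^{4m}$, $\gamma_m=2^{-m}$, $\ell_m=6\cdot2^{2m}(2^m+1)^2$, and for $n\ge17$ let $m=m(n)$ be the unique integer with $n_m\le n<n_{m+1}$. Then: - for $n=n_m$: $\mathsf{SR}(\mathbf X_n)=\gamma_m/2$, $\mathsf{CR}(\mathbf X_n)=\gamma_m\sqrt2/2$, $\mathsf{MR}(\mathbf X_n)=\sqrt2$; - for $n=n_m+1,\ldots,n_m+\ell_m-1$: $\mathsf{SR}(\mathbf X_n)=\gamma_m/(2\sqrt2)$, $\mathsf{CR}(\mathbf X_n)=\gamma_m\sqrt2/2$, $\mathsf{MR}(\mathbf X_n)=2$; - for $n=n_m+\ell_m$: $\mathsf{SR}(\mathbf X_n)=\gamma_m/(2\sqrt2)$, $\mathsf{CR}(\mathbf X_n)=\gamma_m/2$, $\mathsf{MR}(\mathbf X_n)=\sqrt2$; - for $n=n_m+\ell_m+1,\ldots,n_{m+1}-1$: $\mathsf{SR}(\mathbf X_n)=\gamma_m/4$, $\mathsf{CR}(\mathbf X_n)=\gamma_m/2$, $\mathsf{MR}(\mathbf X_n)=2$.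
   Context: Fill distance $\mathsf{CR}(\mathbf X_n)=\sup_{\mathbf x\in\mathscr X}\min_{i\le n}\|\mathbf x-\mathbf x_i\|_2$; separation radius $\mathsf{SR}(\mathbf X_n)=\tfrac12\min_{i\ne j\le n}\|\mathbf x_i-\mathbf x_j\|_2$; mesh-ratio $\mathsf{MR}(\mathbf X_n)=\mathsf{CR}(\mathbf X_n)/\mathsf{SR}(\mathbf X_n)$. *)

(* Defs.v *)
From HB Require Import structures.
From mathcomp Require Import all_boot all_order all_algebra.
From mathcomp Require Import all_classical all_reals.
Set Implicit Arguments. Unset Strict Implicit. Unset Printing Implicit Defensive.
Import Order.TTheory GRing.Theory Num.Theory.
Local Open Scope ring_scope.
Local Open Scope classical_set_scope.

Definition pt (R : realType) := 'I_4 -> R.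

Definition dist2 (R : realType) (x y : pt R) : R :=
  Num.sqrt (\sum_(k < 4) (x k - y k) ^+ 2).

Definition cube (R : realType) : set (pt R) :=
  [set y | forall k, 0 <= y k <= 1].

Definition centre (R : realType) : pt R := fun _ => 2^-1.

Definition mindist (R : realType) (x : nat -> pt R) (n : nat) (y : pt R) : R :=
  inf [set d | exists i, (1 <= i <= n)%N /\ d = dist2 y (x i)].

Definition CR (R : realType) (x : nat -> pt R) (n : nat) : R :=
  sup [set d | exists y, cube y /\ d = mindist x n y].

Definition SR (R : realType) (x : nat -> pt R) (n : nat) : R :=
  2^-1 * inf [set d | exists i j, (1 <= i <= n)%N /\ (1 <= j <= n)%N
                                  /\ i <> j /\ d = dist2 (x i) (x j)].

Definition MR (R : realType) (x : nat -> pt R) (n : nat) : R := CR x n / SR x n.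

Definition greedy_seq (R : realType) (x : nat -> pt R) : Prop :=
  x 1%N = centre R /\
  forall n, (1 <= n)%N ->
    cube (x n.+1) /\ forall y, cube y -> mindist x n y <= mindist x n (x n.+1).

Definition n_ (m : nat) : nat := ((2 ^ m + 1) ^ 4 + 2 ^ (4 * m))%N.
Definition l_ (m : nat) : nat := (6 * 2 ^ (2 * m) * (2 ^ m + 1) ^ 2)%N.
Definition gamma (R : realType) (m : nat) : R := (2 ^+ m)^-1.

(* Main.v *)
Require Import Defs.
From mathcomp Require Import all_boot all_order all_algebra.
From mathcomp Require Import all_classical all_reals.
From mathcomp Require Import zify ring lra.
Import Order.TTheory GRing.Theory Num.Theory.
Local Open Scope ring_scope.

Section Gen.
Variable R : realType.
Implicit Types (x : nat -> pt R) (r : R).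

Lemma sup_max (E : set R) s : E s -> (forall e, E e -> e <= s) -> sup E = s.
Proof.
move=> Es ub; apply/le_anti/andP; split.
  by apply: ge_sup; [exists s | exact: ub].
by apply: (ub_le_sup _ Es); exists s.
Qed.

Lemma inf_min (E : set R) s : E s -> (forall e, E e -> s <= e) -> inf E = s.
Proof.
move=> Es lb; apply/le_anti/andP; split.
  by apply: (ge_inf _ Es); exists s.
by apply: lb_le_inf; [exists s | exact: lb].
Qed.

Lemma dist2_ge0 (a b : pt R) : 0 <= dist2 a b.
Proof. exact: sqrtr_ge0. Qed.

Lemma dist2C (a b : pt R) : dist2 a b = dist2 b a.
Proof. by rewrite /dist2; congr Num.sqrt; apply: eq_bigr => k _; rewrite -sqrrN opprB. Qed.

Lemma dist2_xx (a : pt R) : dist2 a a = 0.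
Proof. by rewrite /dist2 big1 ?sqrtr0 // => k _; rewrite subrr expr0n. Qed.

Lemma mindist_le x n y i : (1 <= i <= n)%N -> mindist x n y <= dist2 y (x i).
Proof.
move=> Hi; apply: (ge_inf _ (ex_intro _ i (conj Hi erefl))).
by exists 0 => d [j [_ ->]]; exact: dist2_ge0.
Qed.

Lemma mindist_ge x n y d : (1 <= n)%N ->
  (forall i, (1 <= i <= n)%N -> d <= dist2 y (x i)) -> d <= mindist x n y.
Proof.
move=> Hn H; apply: lb_le_inf.
  by exists (dist2 y (x 1%N)), 1%N; split; rewrite ?lexx ?Hn.
by move=> e [j [Hj ->]]; exact: H.
Qed.

Lemma CR_eq x n r : (exists y, cube y /\ mindist x n y = r) ->
  (forall y, cube y -> mindist x n y <= r) -> CR x n = r.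
Proof.
move=> [y [cy <-]] H; apply: sup_max; first by exists y.
by move=> e [z [cz ->]]; rewrite H.
Qed.

Lemma SR_eq x n r :
  (exists i j, [/\ (1 <= i <= n)%N, (1 <= j <= n)%N, i <> j & dist2 (x i) (x j) = r]) ->
  (forall i j, (1 <= i <= n)%N -> (1 <= j <= n)%N -> i <> j -> r <= dist2 (x i) (x j)) ->
  SR x n = r / 2.
Proof.
move=> [i [j [Hi Hj Hij <-]]] H; rewrite /SR mulrC; congr (_ * _).
apply: inf_min; first by exists i, j.
by move=> e [a [b [Ha [Hb [Hab ->]]]]]; apply: H.
Qed.


Lemma phase x k L r (B : set (pt R)) (h : 'I_L -> pt R) :
  greedy_seq x -> (1 <= k)%N -> 0 < r ->
  (forall y, B y <-> exists i, (1 <= i <= k)%N /\ x i = y) ->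
  (forall i j, (1 <= i <= k)%N -> (1 <= j <= k)%N -> i <> j -> r <= dist2 (x i) (x j)) ->
  injective h ->
  (forall t b, B b -> r <= dist2 (h t) b) ->
  (forall t t', t <> t' -> r <= dist2 (h t) (h t')) ->
  (forall y, cube y -> exists b, B b /\ dist2 y b <= r) ->
  (forall y, cube y -> (forall b, B b -> r <= dist2 y b) -> exists t, h t = y) ->
  (forall t, cube (h t)) ->
  forall j, (j <= L)%N ->
   [/\ forall i, (k < i <= k + j)%N -> exists t, x i = h t,
       forall i i', (1 <= i <= k+j)%N -> (1 <= i' <= k+j)%N -> i <> i' -> r <= dist2 (x i) (x i'),
       (j < L)%N -> CR x (k+j) = r,
       (0 < j)%N -> SR x (k+j) = r/2 &
       j = L -> forall y, (B y \/ exists t, h t = y) <-> exists i, (1 <= i <= k+L)%N /\ x i = y].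
Proof.
move=> Hg Hk Hr HB Hsep Hinj HHB HHH Hcov Hdeep Hcube.
have F1 n y : (k <= n)%N -> cube y -> mindist x n y <= r.
  move=> Hkn cy; have [b [Bb db]] := Hcov y cy.
  have [i [Hi Hxi]] := (HB b).1 Bb.
  apply: le_trans db; rewrite -Hxi; apply: mindist_le.
  by move: Hi Hkn; clear; lia.
have Bne t b : B b -> h t <> b.
  move=> Bb E; have := HHB t b Bb; rewrite E dist2_xx => H0.
  by move: (lt_le_trans Hr H0); rewrite ltxx.
have Xne (i i' : nat) : r <= dist2 (x i) (x i') -> x i <> x i'.
  move=> H E; move: H; rewrite E dist2_xx => H0.
  by move: (lt_le_trans Hr H0); rewrite ltxx.
pose Inv j := (forall i, (k < i <= k + j)%N -> exists t, x i = h t) /\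
   (forall i i', (1 <= i <= k+j)%N -> (1 <= i' <= k+j)%N -> i <> i' -> r <= dist2 (x i) (x i')).
have free j : (j < L)%N -> Inv j -> exists t, forall i, (1 <= i <= k+j)%N -> x i <> h t.
  move=> HjL [Ia Ib]; apply: contrapT => Hn.
  have H t : exists s : 'I_j, x (k + s.+1)%N = h t.
    apply: contrapT => Hnt; apply: Hn; exists t => i Hi Hx.
    have Hki : (k < i)%N.
      case: (ltnP k i) => // Hik; have [] := Bne t (x i).
        by apply/HB; exists i; split => //; move: Hi Hik; clear; lia.
      by [].
    have Hs : (i - k.+1 < j)%N by move: Hi Hki; clear; lia.
    apply: Hnt; exists (Ordinal Hs) => /=.
    by have -> : (k + (i - k.+1).+1 = i)%N by move: Hki; clear; lia.
  have [g Hgt] := choice H.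
  have ginj : injective g by move=> t t' E; apply: Hinj; rewrite -(Hgt t) -(Hgt t') E.
  by have := leq_card g ginj; rewrite !card_ord => /(leq_trans HjL); rewrite ltnn.
have mh j t : Inv j -> (forall i, (1 <= i <= k+j)%N -> x i <> h t) ->
    r <= mindist x (k+j) (h t).
  move=> [Ia Ib] Ht; apply: mindist_ge; first by move: Hk; clear; lia.
  move=> i Hi; case: (leqP i k) => Hik.
    by apply: HHB; apply/HB; exists i; split => //; move: Hi Hik; clear; lia.
  have [t' Ht'] := Ia i (ltac:(move: Hi Hik; clear; lia)).
  rewrite Ht'; apply: HHH => Ett; apply: (Ht i Hi); by rewrite Ht' Ett.
have Inv_all j : (j <= L)%N -> Inv j.
  elim: j => [|j IH] HjL.
    split; first by move=> i; rewrite addn0; clear; lia.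
    by rewrite addn0.
  have IHj := IH (ltnW HjL); have [Ia Ib] := IHj.
  have [t Ht] := free j HjL IHj.
  have mh1 := mh j t IHj Ht.
  have Hn1 : (1 <= k + j)%N by move: Hk; clear; lia.
  have [cx gx] := Hg.2 _ Hn1.
  have mx := le_trans mh1 (gx _ (Hcube t)).
  have dx i : (1 <= i <= k + j)%N -> r <= dist2 (x (k+j).+1) (x i).
    by move=> Hi; apply: (le_trans mx); exact: mindist_le.
  have [t' Ht'] : exists t', h t' = x (k+j).+1.
    apply: Hdeep => // b Bb; have [i [Hi <-]] := (HB b).1 Bb.
    by apply: dx; move: Hi; clear; lia.
  split.
    move=> i Hi; case: (ltnP i (k + j.+1)) => Hi2.
      by apply: Ia; move: Hi Hi2; clear; lia.
    have -> : i = (k+j).+1 by move: Hi Hi2; clear; lia.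
    by exists t'.
  move=> i i' Hi Hi' Hii'.
  case: (ltnP i (k + j.+1)) => Hi2; case: (ltnP i' (k + j.+1)) => Hi2'.
  - by apply: Ib => //; move: Hi Hi' Hi2 Hi2'; clear; lia.
  - have -> : i' = (k+j).+1 by move: Hi' Hi2'; clear; lia.
    by rewrite dist2C; apply: dx; move: Hi Hi2; clear; lia.
  - have -> : i = (k+j).+1 by move: Hi Hi2; clear; lia.
    by apply: dx; move: Hi' Hi2'; clear; lia.
  - by exfalso; move: Hi Hi' Hi2 Hi2' Hii'; clear; lia.
move=> j HjL; have IJ := Inv_all j HjL; have [Ia Ib] := IJ.
split => //.
- move=> HjL'; have [t Ht] := free j HjL' IJ.
  apply: CR_eq.
    exists (h t); split => //; apply/le_anti/andP; split.
      by apply: F1 => //; exact: leq_addr.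
    exact: mh.
  by move=> y cy; apply: F1 => //; exact: leq_addr.
- move=> Hj0; have [t Ht] := Ia k.+1 (ltac:(move: Hj0; clear; lia)).
  have [b [Bb db]] := Hcov _ (Hcube t).
  have [i [Hi Hxi]] := (HB b).1 Bb.
  apply: SR_eq; last exact: Ib.
  exists k.+1, i; split.
  + by move: Hj0 Hk; clear; lia.
  + by move: Hi; clear; lia.
  + by move: Hi; clear; lia.
  + by rewrite Ht Hxi; apply/le_anti/andP; split => //; exact: HHB.
- move=> EjL y; subst j; split.
    case=> [By|[t <-]].
      have [i [Hi <-]] := (HB y).1 By; exists i; split => //.
      by move: Hi; clear; lia.
    have H (s : 'I_L) : exists t' : 'I_L, x (k + s.+1)%N = h t'.
      by apply: Ia; move: (ltn_ord s); clear; lia.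
    have [f Hf] := choice H.
    have finj : injective f.
      move=> s s' E; apply: ord_inj; case: (boolP (nat_of_ord s == nat_of_ord s')) => [/eqP//|Ne]; exfalso.
      have Hne : x (k + s.+1)%N <> x (k + s'.+1)%N.
        apply: Xne; apply: Ib.
        + by move: (ltn_ord s); clear; lia.
        + by move: (ltn_ord s'); clear; lia.
        + by move=> E'; move: Ne E'; clear; lia.
      by apply: Hne; rewrite Hf (Hf s') E.
    have /codomP [s ->] := injF_onto finj t.
    by exists (k + s.+1)%N; split; [move: (ltn_ord s); clear; lia | exact: Hf].
  move=> [i [Hi <-]]; case: (leqP i k) => Hik.
    by left; apply/HB; exists i; split => //; move: Hi Hik; clear; lia.
  right; have [t Ht] := Ia i (ltac:(move: Hi Hik; clear; lia)).
  by exists t.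
Qed.

End Gen.
Definition k0 : 'I_4 := @Ordinal 4 0 isT.
Definition k1 : 'I_4 := @Ordinal 4 1 isT.
Definition k2 : 'I_4 := @Ordinal 4 2 isT.
Definition k3 : 'I_4 := @Ordinal 4 3 isT.

Lemma sum4 (V : nmodType) (F : 'I_4 -> V) : \sum_(k < 4) F k = F k0 + F k1 + F k2 + F k3.
Proof.
rewrite !big_ord_recr big_ord0 /= add0r.
by congr (_ + _ + _ + _); congr F; apply: val_inj.
Qed.

Lemma ord4P (k : 'I_4) : [\/ k = k0, k = k1, k = k2 | k = k3].
Proof.
case: k => [[|[|[|[|n]]]] Hn].
- by constructor 1; apply: val_inj.
- by constructor 2; apply: val_inj.
- by constructor 3; apply: val_inj.
- by constructor 4; apply: val_inj.
- by [].
Qed.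

Definition cls := iota 0 4.
Definition chk4 (P : nat -> nat -> nat -> nat -> bool) :=
  all (fun a => all (fun b => all (fun c => all (fun d => P a b c d) cls) cls) cls) cls.
Definition chkb4 (P : bool -> bool -> bool -> bool -> bool) :=
  all (fun a => all (fun b => all (fun c => all (fun d => P a b c d) [:: true; false]) [:: true; false]) [:: true; false]) [:: true; false].

Lemma chk4P P : chk4 P -> forall a b c d, (a < 4)%N -> (b < 4)%N -> (c < 4)%N -> (d < 4)%N -> P a b c d.
Proof.
move=> H a b c d Ha Hb Hc Hd.
have mc n : (n < 4)%N -> n \in cls by rewrite /cls mem_iota.
move/allP: H => /(_ a (mc _ Ha)) /allP /(_ b (mc _ Hb)) /allP /(_ c (mc _ Hc)) /allP /(_ d (mc _ Hd)).
done.
Qed.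

Lemma chkb4P P : chkb4 P -> forall a b c d, P a b c d.
Proof.
move=> H a b c d.
have mc n : n \in [:: true; false] by case: n.
by move/allP: H => /(_ a (mc _)) /allP /(_ b (mc _)) /allP /(_ c (mc _)) /allP /(_ d (mc _)).
Qed.

Definition cl (v : 'I_4 -> nat) (F : nat -> nat -> nat -> nat -> bool) : bool :=
  F (v k0 %% 4)%N (v k1 %% 4)%N (v k2 %% 4)%N (v k3 %% 4)%N.

Lemma clP P v : chk4 P -> P (v k0 %% 4)%N (v k1 %% 4)%N (v k2 %% 4)%N (v k3 %% 4)%N.
Proof. by move/chk4P; apply; apply: ltn_pmod. Qed.

Definition F0 (a b c d : nat) := [&& a == 0, b == 0, c == 0 & d == 0]%N.
Definition F2 (a b c d : nat) := [&& a == 2, b == 2, c == 2 & d == 2]%N.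
Definition FA a b c d := F0 a b c d || F2 a b c d.
Definition c2 (a b c d : nat) : nat := ((a == 2) + (b == 2) + (c == 2) + (d == 2))%N.
Definition ev (a b c d : nat) := [&& ~~ odd a, ~~ odd b, ~~ odd c & ~~ odd d].
Definition od (a b c d : nat) := [&& odd a, odd b, odd c & odd d].
Definition FD a b c d := ev a b c d && (c2 a b c d == 2)%N.
Definition FAD a b c d := FA a b c d || FD a b c d.
Definition FE a b c d := (ev a b c d && odd (c2 a b c d)) || od a b c d.

Definition mu (c c' : nat) (ne : bool) : nat :=
  if c == c' then (if ne then 16 else 0) else if ((c + c') %% 2 == 1)%N then 1 else 4.

Definition sepcheck F F' (rho : nat) :=
  chk4 (fun a b c d => if F a b c d then
   chk4 (fun a' b' c' d' => if F' a' b' c' d' then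
     chkb4 (fun n0 n1 n2 n3 =>
       if [&& ((a != a')%N ==> n0), ((b != b')%N ==> n1), ((c != c')%N ==> n2),
              ((d != d')%N ==> n3) & (n0 || n1 || n2 || n3)]
       then (rho <= mu a a' n0 + mu b b' n1 + mu c c' n2 + mu d d' n3)%N else true)
   else true) else true).

Definition disj F F' := chk4 (fun a b c d => ~~ (F a b c d && F' a b c d)).

Lemma checks :
  [/\ sepcheck F0 F2 16, sepcheck F0 F0 16, sepcheck FD FA 8, sepcheck FD FD 8
      & sepcheck FE FAD 4 /\ sepcheck FE FE 4].
Proof. by split; vm_compute. Qed.

Lemma checks2 : [/\ disj F0 F2, disj FD FA & disj FE FAD].
Proof. by split; vm_compute. Qed.
Section Geo.
Variable R : realType.

Definition Gpt (M : nat) (v : 'I_4 -> nat) : pt R := fun k => (v k)%:R / M%:R.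
Definition sqd (a b : pt R) : R := \sum_(k < 4) (a k - b k) ^+ 2.

Lemma dist_le (a b : pt R) r : 0 <= r -> sqd a b <= r ^+ 2 -> dist2 a b <= r.
Proof.
move=> r0 H; rewrite /dist2 -(ger0_norm r0) -sqrtr_sqr.
by rewrite ler_sqrt // sqr_ge0.
Qed.

Lemma dist_ge (a b : pt R) r : 0 <= r -> r ^+ 2 <= sqd a b -> r <= dist2 a b.
Proof.
move=> r0 H; rewrite /dist2 -(ger0_norm r0) -sqrtr_sqr.
rewrite ler_sqrt //; apply: le_trans H; exact: sqr_ge0.
Qed.

Lemma dist_ge_inv (a b : pt R) r : 0 <= r -> r <= dist2 a b -> r ^+ 2 <= sqd a b.
Proof.
move=> r0 H; have s0 : 0 <= sqd a b by apply: sumr_ge0 => k _; exact: sqr_ge0.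
rewrite -(sqr_sqrtr s0); apply: lerXn2r => //; rewrite nnegrE //.
exact: sqrtr_ge0.
Qed.

Lemma sqd_Gpt (y : pt R) M v : (0 < M)%N ->
  sqd y (Gpt M v) = (\sum_(k < 4) (y k * M%:R - (v k)%:R) ^+ 2) / (M%:R) ^+ 2.
Proof.
move=> M0; rewrite /sqd mulr_suml; apply: eq_bigr => k _; rewrite /Gpt.
have HM : (M%:R : R) != 0 by rewrite pnatr_eq0 -lt0n.
by field.
Qed.

Lemma sqd_GG M v v' : (0 < M)%N ->
  sqd (Gpt M v) (Gpt M v') = (\sum_(k < 4) ((v k)%:R - (v' k)%:R) ^+ 2) / (M%:R) ^+ 2.
Proof.
move=> M0; rewrite sqd_Gpt //; congr (_ / _); apply: eq_bigr => k _.
have HM : (M%:R : R) != 0 by rewrite pnatr_eq0 -lt0n.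
by rewrite /Gpt divfK.
Qed.

Lemma coord_lb (a b : nat) : (mu (a %% 4) (b %% 4) (a != b))%:R <= ((a%:R - b%:R) ^+ 2 : R).
Proof.
wlog ab : a b / (a <= b)%N.
  move=> W; case: (leqP a b) => [/W//|/ltnW ba].
  have -> : mu (a %% 4) (b %% 4) (a != b) = mu (b %% 4) (a %% 4) (b != a).
    by rewrite /mu eq_sym (eq_sym a) addnC.
  by rewrite -sqrrN opprB; apply: W.
rewrite -sqrrN opprB -natrB // -natrX ler_nat.
rewrite /mu; set d := (b - a)%N.
case: ifP => [/eqP E|/negbT E]; first case: ifP => [Ne|_] //.
- have Hd : (4 <= d)%N by rewrite /d; move: E Ne ab; clear; lia.
  by move: Hd; clear; nia.
- case: ifP => H2.
  + have Hd : (1 <= d)%N by rewrite /d; move: E ab; clear; lia.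
    by rewrite expn_gt0 Hd.
  + move/negbT: H2 => H2.
    have Hd : (2 <= d)%N by rewrite /d; move: E ab H2; clear; lia.
    by move: Hd; clear; nia.
Qed.

Lemma m4 n : (n %% 4 < 4)%N. Proof. by rewrite ltn_pmod. Qed.

Lemma sep_ok F F' (rho : nat) (v v' : 'I_4 -> nat) :
  sepcheck F F' rho -> cl v F -> cl v' F' -> (exists k, v k != v' k) ->
  (rho%:R : R) <= \sum_(k < 4) ((v k)%:R - (v' k)%:R) ^+ 2.
Proof.
move=> Hc Fv Fv' [k Hk]; rewrite sum4.
have L k' := coord_lb (v k') (v' k').
apply: le_trans (lerD (lerD (lerD (L k0) (L k1)) (L k2)) (L k3)).
rewrite -!natrD ler_nat.
move: Hc => /chk4P /(_ _ _ _ _ (m4 (v k0)) (m4 (v k1))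
  (m4 (v k2)) (m4 (v k3))).
rewrite /cl in Fv Fv'; rewrite Fv.
move=> /chk4P /(_ _ _ _ _ (m4 (v' k0)) (m4 (v' k1))
  (m4 (v' k2)) (m4 (v' k3))).
rewrite Fv' => /chkb4P /(_ (v k0 != v' k0) (v k1 != v' k1) (v k2 != v' k2) (v k3 != v' k3)).
rewrite ifT //.
have imp (a b : nat) : ((a %% 4 != b %% 4)%N ==> (a != b)).
  by apply/implyP; apply: contra => /eqP ->.
rewrite !imp /=.
by case: (ord4P k) Hk => ->  ->; rewrite ?orbT.
Qed.


Definition qD (p : R) : nat := (4 * Num.truncn ((p + 2) / 4))%N.
Definition qD' (N : nat) (p : R) : nat :=
  if (p < (qD p)%:R) || (qD p == 4 * N)%N then (qD p - 2)%N else (qD p + 2)%N.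

Lemma coordD N p : (0 < N)%N -> 0 <= p <= (4 * N)%:R ->
  [/\ (qD p <= 4 * N)%N, (qD' N p <= 4 * N)%N, (qD p %% 4 = 0)%N, (qD' N p %% 4 = 2)%N &
   (p - (qD p)%:R) ^+ 2 + (p - (qD' N p)%:R) ^+ 2 <= 4 /\
   (4 <= (p - (qD p)%:R) ^+ 2 + (p - (qD' N p)%:R) ^+ 2 ->
     exists v, [/\ (v <= 4 * N)%N, p = v%:R, ~~ odd v &
                   (p - (qD p)%:R) ^+ 2 = 4 * ((v %% 4 == 2)%N)%:R])].
Proof.
move=> N0 /andP[p0 pM].
rewrite /qD' /qD; set j := Num.truncn ((p + 2) / 4).
have := truncn_itv (_ : 0 <= (p + 2) / 4); rewrite -/j => /(_ ltac:(lra)) /andP[Hj1 Hj2].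
have NR : (4 * N)%:R = 4 * (N%:R : R) by rewrite natrM.
rewrite NR in pM.
have jN : (j <= N)%N.
  by rewrite -ltnS -(ltr_nat R) -[N.+1]addn1 natrD; lra.
set q := (4 * j)%N.
have Qe : (q%:R : R) = 4 * j%:R by rewrite natrM.
have Hq1 : (q%:R : R) <= p + 2 by lra.
have Hq2 : p + 2 < (q%:R : R) + 4 by move: Hj2; rewrite -[j.+1]addn1 natrD; lra.
have q4 : (q %% 4 = 0)%N by rewrite /q; clear; lia.
have qN : (q <= 4 * N)%N by rewrite /q; move: jN; clear; lia.
case: (boolP (p < q%:R)) => pq /=.
- have q1 : (4 <= q)%N.
    have : (0 < q)%N by rewrite -(ltr_nat R); lra.
    by rewrite /q; clear; lia.
  have Q2 : ((q - 2)%N%:R : R) = q%:R - 2 by rewrite natrB //; move: q1; clear; lia.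
  rewrite Q2; split => //; try (by move: q1 qN; clear; lia).
  split; first by nra.
  move=> H; exists (q - 2)%N; split.
  + by move: qN; clear; lia.
  + rewrite Q2; nra.
  + by move: q4 q1; clear; lia.
  + have -> : ((q - 2) %% 4 == 2)%N by move: q4 q1; clear; lia.
    have -> : p = q%:R - 2 by nra.
    rewrite /=; nra.
move: pq; rewrite -leNgt => pq.
case: (boolP (q == 4 * N)%N) => qe /=.
- have pe : p = q%:R by move: pq; rewrite (eqP qe) NR; lra.
  have q1 : (4 <= q)%N by rewrite (eqP qe); move: N0; clear; lia.
  have Q2 : ((q - 2)%N%:R : R) = q%:R - 2 by rewrite natrB //; move: q1; clear; lia.
  rewrite Q2; split => //; try (by move: q1 qN; clear; lia).
  split; first by rewrite pe; lra.
  move=> _; exists q; split.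
  + by [].
  + by [].
  + by move: q4; clear; lia.
  + by rewrite q4 /= pe; lra.
- have q2 : (q + 2 <= 4 * N)%N by move: qN qe q4; rewrite /q; clear; lia.
  rewrite natrD; split => //; try (by move: q4; clear; lia).
  split; first by nra.
  move=> H; exists q; split.
  + by [].
  + nra.
  + by move: q4; clear; lia.
  + by rewrite q4 /=; nra.
Qed.


Definition wE (p : R) : nat := (2 * Num.truncn ((p + 1) / 2))%N.
Definition wE' (N : nat) (p : R) : nat :=
  if (p < (wE p)%:R) || (wE p == 4 * N)%N then (wE p - 2)%N else (wE p + 2)%N.

Lemma coordE N p : (0 < N)%N -> 0 <= p <= (4 * N)%:R ->
 [/\ (wE p <= 4 * N)%N, (wE' N p <= 4 * N)%N, ~~ odd (wE p), ~~ odd (wE' N p) &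
  [/\ ((wE' N p %% 4 == 2) = ~~ (wE p %% 4 == 2))%N, (p - (wE p)%:R) ^+ 2 <= 1,
      3 * (p - (wE p)%:R) ^+ 2 + (p - (wE' N p)%:R) ^+ 2 <= 4,
      (4 <= 3 * (p - (wE p)%:R) ^+ 2 + (p - (wE' N p)%:R) ^+ 2 ->
         (p - (wE p)%:R) ^+ 2 = 0 \/ (p - (wE p)%:R) ^+ 2 = 1) &
      ((p - (wE p)%:R) ^+ 2 = 0 -> p = (wE p)%:R /\ (p - (wE' N p)%:R) ^+ 2 = 4) /\
      ((p - (wE p)%:R) ^+ 2 = 1 -> (p - (wE' N p)%:R) ^+ 2 = 1 /\
          exists v, [/\ (v <= 4 * N)%N, p = v%:R & odd v])]].
Proof.
move=> N0 /andP[p0 pM].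
rewrite /wE' /wE; set j := Num.truncn ((p + 1) / 2).
have := truncn_itv (_ : 0 <= (p + 1) / 2); rewrite -/j => /(_ ltac:(lra)) /andP[Hj1 Hj2].
have NR : (4 * N)%:R = 4 * (N%:R : R) by rewrite natrM.
rewrite NR in pM.
have jN : (j <= 2 * N)%N.
  by rewrite -ltnS -(ltr_nat R) -[(2 * N).+1]addn1 natrD natrM; lra.
set w := (2 * j)%N.
have We : (w%:R : R) = 2 * j%:R by rewrite natrM.
have Hw1 : (w%:R : R) <= p + 1 by lra.
have Hw2 : p + 1 < (w%:R : R) + 2 by move: Hj2; rewrite -[j.+1]addn1 natrD; lra.
have w2 : (~~ odd w) by rewrite /w mul2n odd_double.
have wN : (w <= 4 * N)%N by rewrite /w; move: jN; clear; lia.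
case: (boolP (p < w%:R)) => pw /=.
- have w1 : (2 <= w)%N.
    have : (0 < w)%N by rewrite -(ltr_nat R); lra.
    by move: w2; rewrite /w; clear; lia.
  have W2 : ((w - 2)%N%:R : R) = w%:R - 2 by rewrite natrB //; move: w1; clear; lia.
  rewrite W2; split => //.
  + by move: wN; clear; lia.
  + by move: w2 w1; clear; lia.
  split.
  + by move: w2 w1; clear; lia.
  + nra.
  + nra.
  + move=> H; right; nra.
  split; first by move=> H; nra.
  move=> H; have pe : p = w%:R - 1 by nra.
  split; first by rewrite pe; nra.
  exists (w - 1)%N; split.
  + by move: wN; clear; lia.
  + by rewrite pe natrB //; move: w1; clear; lia.
  + by move: w2 w1; clear; lia.
move: pw; rewrite -leNgt => pw.
case: (boolP (w == 4 * N)%N) => we /=.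
- have pe : p = w%:R by move: pw; rewrite (eqP we) NR; lra.
  have w1 : (4 <= w)%N by rewrite (eqP we); move: N0; clear; lia.
  have W2 : ((w - 2)%N%:R : R) = w%:R - 2 by rewrite natrB //; move: w1; clear; lia.
  rewrite W2; split => //.
  + by move: wN; clear; lia.
  + by move: w2 w1; clear; lia.
  split.
  + by move: w2 w1; clear; lia.
  + rewrite pe; nra.
  + rewrite pe; nra.
  + by move=> _; left; rewrite pe; nra.
  split; first by move=> _; split => //; rewrite pe; nra.
  by move=> H; exfalso; move: H; rewrite pe; nra.
- have w3 : (w + 2 <= 4 * N)%N by move: wN we w2; clear; lia.
  rewrite natrD; split => //.
  + by move: w2; clear; lia.
  split.
  + by move: w2; clear; lia.
  + nra.
  + nra.
  + by move=> H; left; nra.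
  split; first by move=> H; split; nra.
  by move=> H; exfalso; nra.
Qed.


Definition GS (M : nat) F (y : pt R) :=
  exists v : 'I_4 -> nat, (forall k, (v k <= M)%N) /\ cl v F /\ y = Gpt M v.

Lemma divM_le (a b c : R) : 0 < c -> (a / c <= b / c) = (a <= b).
Proof. by move=> c0; rewrite ler_pM2r // invr_gt0. Qed.

Lemma cube_p (y : pt R) M k : cube y -> 0 <= y k * M%:R <= M%:R.
Proof.
move=> /(_ k) /andP[y0 y1]; apply/andP; split.
  by apply: mulr_ge0.
by rewrite -[X in _ <= X]mul1r; apply: ler_wpM2r.
Qed.

Lemma Gpt_p (y : pt R) M (v : 'I_4 -> nat) : (0 < M)%N ->
  (forall k, y k * M%:R = (v k)%:R) -> y = Gpt M v.
Proof.
move=> M0 H; apply: funext => k; rewrite /Gpt -H mulrK //.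
by rewrite unitfE pnatr_eq0 -lt0n.
Qed.

Lemma GS_cube M F y : (0 < M)%N -> GS M F y -> cube y.
Proof.
move=> M0 [v [Hv [_ ->]]] k; rewrite /Gpt; apply/andP; split.
  by apply: divr_ge0.
rewrite ler_pdivrMr ?mul1r ?ler_nat //.
by rewrite ltr0n.
Qed.

Lemma coverD N (y : pt R) : (0 < N)%N -> cube y ->
  (exists b, GS (4 * N) FA b /\ sqd y b <= 8 / ((4 * N)%:R) ^+ 2) /\
  ((forall b, GS (4 * N) FA b -> 8 / ((4 * N)%:R) ^+ 2 <= sqd y b) -> GS (4 * N) FD y).
Proof.
move=> N0 cy; set M := (4 * N)%N.
have M0 : (0 < M)%N by rewrite /M; move: N0; clear; lia.
have M2 : 0 < (M%:R : R) ^+ 2 by rewrite exprn_gt0 // ltr0n.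
pose p k := y k * M%:R.
have C k := coordD N (p k) N0 (cube_p y M k cy).
pose q k := qD (p k); pose q' k := qD' N (p k).
have GSq : GS M FA (Gpt M q).
  exists q; split; first by move=> k; have [] := C k.
  split => //; rewrite /cl /FA /F0.
  have [_ _ -> _ _] := C k0; have [_ _ -> _ _] := C k1.
  by have [_ _ -> _ _] := C k2; have [_ _ -> _ _] := C k3.
have GSq' : GS M FA (Gpt M q').
  exists q'; split; first by move=> k; have [] := C k.
  split => //; rewrite /cl /FA /F2 orbC.
  have [_ _ _ -> _] := C k0; have [_ _ _ -> _] := C k1.
  by have [_ _ _ -> _] := C k2; have [_ _ _ -> _] := C k3.
have E1 : sqd y (Gpt M q) = (\sum_(k < 4) (p k - (q k)%:R) ^+ 2) / (M%:R) ^+ 2.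
  by rewrite sqd_Gpt.
have E2 : sqd y (Gpt M q') = (\sum_(k < 4) (p k - (q' k)%:R) ^+ 2) / (M%:R) ^+ 2.
  by rewrite sqd_Gpt.
rewrite !sum4 in E1 E2.
have [_ _ _ _ [S0 D0]] := C k0; have [_ _ _ _ [S1 D1]] := C k1.
have [_ _ _ _ [S2 D2]] := C k2; have [_ _ _ _ [S3 D3]] := C k3.
split.
  case: (lerP (\sum_(k < 4) (p k - (q k)%:R) ^+ 2) 8) => H.
    exists (Gpt M q); split => //; rewrite E1 divM_le //.
    by move: H; rewrite sum4.
  exists (Gpt M q'); split => //; rewrite E2 divM_le //.
  move: H; rewrite sum4 /q /q'; lra.
move=> Hd.
have H1 := Hd _ GSq; have H2 := Hd _ GSq'.
rewrite E1 divM_le // in H1; rewrite E2 divM_le // in H2.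
have X k : exists v, [/\ (v <= 4 * N)%N, p k = v%:R, ~~ odd v &
                   (p k - (qD (p k))%:R) ^+ 2 = 4 * ((v %% 4 == 2)%N)%:R].
  have [_ _ _ _ [Sk Dk]] := C k; apply: Dk.
  by case: (ord4P k) => ->; rewrite /q /q' in H1 H2 S0 S1 S2 S3; lra.
have [v Hv] := choice X.
exists v; split; first by move=> k; have [] := Hv k.
split; last by apply: Gpt_p => // k; have [] := Hv k.
have [_ _ e0 a0] := Hv k0; have [_ _ e1 a1] := Hv k1.
have [_ _ e2 a2] := Hv k2; have [_ _ e3 a3] := Hv k3.
rewrite /q in H1 H2; rewrite a0 a1 a2 a3 in H1.
have H2' : 16 - 4 * (((v k0 %% 4 == 2)%N)%:R + ((v k1 %% 4 == 2)%N)%:R +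
   ((v k2 %% 4 == 2)%N)%:R + ((v k3 %% 4 == 2)%N)%:R) >= 8 :> R.
  by move: S0 S1 S2 S3; rewrite /q /q' a0 a1 a2 a3; lra.
have Hc : ((c2 (v k0 %% 4) (v k1 %% 4) (v k2 %% 4) (v k3 %% 4))%:R : R) = 2.
  rewrite /c2 !natrD; move: H1 H2'.
  lra.
rewrite /cl /FD /ev; apply/andP; split.
  by move: e0 e1 e2 e3; clear; lia.
by rewrite -(eqr_nat R) Hc.
Qed.


Lemma chkAD : chk4 (fun a b c d => (ev a b c d && ~~ odd (c2 a b c d)) ==> FAD a b c d).
Proof. by vm_compute. Qed.

Lemma coverE N (y : pt R) : (0 < N)%N -> cube y ->
  (exists b, GS (4 * N) FAD b /\ sqd y b <= 4 / ((4 * N)%:R) ^+ 2) /\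
  ((forall b, GS (4 * N) FAD b -> 4 / ((4 * N)%:R) ^+ 2 <= sqd y b) -> GS (4 * N) FE y).
Proof.
move=> N0 cy; set M := (4 * N)%N.
have M0 : (0 < M)%N by rewrite /M; move: N0; clear; lia.
have M2 : 0 < (M%:R : R) ^+ 2 by rewrite exprn_gt0 // ltr0n.
pose p k := y k * M%:R.
have C k := coordE N (p k) N0 (cube_p y M k cy).
pose w k := wE (p k); pose w' k := wE' N (p k).
pose al k := (p k - (w k)%:R) ^+ 2; pose be k := (p k - (w' k)%:R) ^+ 2.
pose flip (j : 'I_4) := fun k => if k == j then w' k else w k.
have Cal k : [/\ al k <= 1, 3 * al k + be k <= 4,
   (4 <= 3 * al k + be k -> al k = 0 \/ al k = 1),
   (al k = 0 -> p k = (w k)%:R /\ be k = 4) &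
   (al k = 1 -> be k = 1 /\ exists v, [/\ (v <= 4 * N)%N, p k = v%:R & odd v])].
  by have [_ _ _ _ [_ ? ? ? [? ?]]] := C k.
have Wb k : (w k <= M)%N /\ (w' k <= M)%N by have [] := C k.
have We k : ~~ odd (w k) /\ ~~ odd (w' k) by have [] := C k.
have Wm k : ((w' k %% 4 == 2) + (w k %% 4 == 2) = 1)%N.
  have [_ _ _ _ [-> _ _ _ _]] := C k; by case: (_ == _).
have Sw : sqd y (Gpt M w) = (al k0 + al k1 + al k2 + al k3) / (M%:R) ^+ 2.
  by rewrite sqd_Gpt // sum4.
have Sf j : sqd y (Gpt M (flip j)) =
   (al k0 + al k1 + al k2 + al k3 - al j + be j) / (M%:R) ^+ 2.
  rewrite sqd_Gpt // sum4; congr (_ / _).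
  by case: (ord4P j) => ->; rewrite /flip /= /al /be /p; ring.
have allodd : al k0 = 1 -> al k1 = 1 -> al k2 = 1 -> al k3 = 1 -> GS M FE y.
  move=> a0 a1 a2 a3.
  have X k : exists v, [/\ (v <= 4 * N)%N, p k = v%:R & odd v].
    have [_ _ _ _ Hk] := Cal k; apply: (proj2 (Hk _)).
    by case: (ord4P k) => ->.
  have [v Hv] := choice X.
  exists v; split; first by move=> k; have [] := Hv k.
  split; last by apply: Gpt_p => // k; have [] := Hv k.
  have [_ _ o0] := Hv k0; have [_ _ o1] := Hv k1.
  have [_ _ o2] := Hv k2; have [_ _ o3] := Hv k3.
  rewrite /cl /FE /od; apply/orP; right.
  by move: o0 o1 o2 o3; clear; lia.
have [A0 B0 _ _ _] := Cal k0; have [A1 B1 _ _ _] := Cal k1.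
have [A2 B2 _ _ _] := Cal k2; have [A3 B3 _ _ _] := Cal k3.
have [_ e0] := We k0; have [_ e1] := We k1; have [_ e2] := We k2; have [_ e3] := We k3.
have [f0 _] := We k0; have [f1 _] := We k1; have [f2 _] := We k2; have [f3 _] := We k3.
have m0 := Wm k0; have m1 := Wm k1; have m2 := Wm k2; have m3 := Wm k3.
case: (boolP (odd (c2 (w k0 %% 4) (w k1 %% 4) (w k2 %% 4) (w k3 %% 4)))) => par.
- have GSf j : GS M FAD (Gpt M (flip j)).
    exists (flip j); split.
      by move=> k; rewrite /flip; case: (k == j); have [] := Wb k.
    split => //.
    move: (clP _ (flip j) chkAD) => /implyP; apply; apply/andP; split.
      by rewrite /ev /flip; case: (ord4P j) => -> /=; move: e0 e1 e2 e3 f0 f1 f2 f3; clear; lia.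
    move: par; rewrite /c2 /flip; case: (ord4P j) => -> /=;
      move: m0 m1 m2 m3; clear; lia.
  split.
    have : (al k0 + al k1 + al k2 + al k3 - al k0 + be k0) +
           (al k0 + al k1 + al k2 + al k3 - al k1 + be k1) +
           (al k0 + al k1 + al k2 + al k3 - al k2 + be k2) +
           (al k0 + al k1 + al k2 + al k3 - al k3 + be k3) <= 16 by lra.
    move=> Hs.
    case: (lerP (al k0 + al k1 + al k2 + al k3 - al k0 + be k0) 4) => H0.
      by exists (Gpt M (flip k0)); split; [exact: GSf | rewrite Sf divM_le //].
    case: (lerP (al k0 + al k1 + al k2 + al k3 - al k1 + be k1) 4) => H1.
      by exists (Gpt M (flip k1)); split; [exact: GSf | rewrite Sf divM_le //].
    case: (lerP (al k0 + al k1 + al k2 + al k3 - al k2 + be k2) 4) => H2.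
      by exists (Gpt M (flip k2)); split; [exact: GSf | rewrite Sf divM_le //].
    exists (Gpt M (flip k3)); split; [exact: GSf | rewrite Sf divM_le //; lra].
  move=> Hd.
  have D j : 4 <= al k0 + al k1 + al k2 + al k3 - al j + be j.
    by have := Hd _ (GSf j); rewrite Sf divM_le.
  have D0 := D k0; have D1 := D k1; have D2 := D k2; have D3 := D k3.
  have Z k : al k = 0 \/ al k = 1.
    have [_ _ Hk _ _] := Cal k; apply: Hk.
    by case: (ord4P k) => ->; lra.
  have key j : al j = 1 -> GS M FE y.
    move=> aj; have [_ _ _ _ /(_ aj) [bj _]] := Cal j.
    have Dj := D j.
    have : al k0 + al k1 + al k2 + al k3 >= 4 by move: Dj; rewrite aj bj; lra.
    by move=> Hs; apply: allodd; lra.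
  case: (Z k0) => [z0|]; last exact: key.
  case: (Z k1) => [z1|]; last exact: key.
  case: (Z k2) => [z2|]; last exact: key.
  case: (Z k3) => [z3|]; last exact: key.
  exists w; split; first by move=> k; have [] := Wb k.
  split; last first.
    apply: Gpt_p => // k; have [_ _ _ Hk _] := Cal k; apply: (proj1 (Hk _)).
    by case: (ord4P k) => ->.
  rewrite /cl /FE /ev; apply/orP; left; rewrite par andbT.
  by move: f0 f1 f2 f3; clear; lia.
- split.
    exists (Gpt M w); split.
      exists w; split; first by move=> k; have [] := Wb k.
      split => //.
      move: (clP _ w chkAD) => /implyP; apply; rewrite par andbT /ev.
      by move: f0 f1 f2 f3; clear; lia.
    by rewrite Sw divM_le //; lra.
  move=> Hd.
  have H : al k0 + al k1 + al k2 + al k3 >= 4.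
    rewrite -(divM_le _ _ _ M2) -Sw; apply: Hd.
    exists w; split; first by move=> k; have [] := Wb k.
    split => //.
    move: (clP _ w chkAD) => /implyP; apply; rewrite par andbT /ev.
    by move: f0 f1 f2 f3; clear; lia.
  by apply: allodd; lra.
Qed.


Lemma cover0 (y : pt R) : cube y ->
  (exists b, GS 4 F2 b /\ sqd y b <= 16 / (4%:R) ^+ 2) /\
  ((forall b, GS 4 F2 b -> 16 / (4%:R) ^+ 2 <= sqd y b) -> GS 4 F0 y).
Proof.
move=> cy.
have M2 : 0 < (4%:R : R) ^+ 2 by rewrite exprn_gt0 // ltr0n.
pose p k := y k * 4%:R.
have Hp k : 0 <= p k <= 4 by have := cube_p y 4 k cy.
pose c := Gpt 4 (fun _ => 2%N).
have GSc : GS 4 F2 c by exists (fun _ => 2%N); split => //.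
have Sc : sqd y c = ((p k0 - 2) ^+ 2 + (p k1 - 2) ^+ 2 + (p k2 - 2) ^+ 2 + (p k3 - 2) ^+ 2) / 4%:R ^+ 2.
  by rewrite sqd_Gpt // sum4.
have [a0 b0] := andP (Hp k0); have [a1 b1] := andP (Hp k1).
have [a2 b2] := andP (Hp k2); have [a3 b3] := andP (Hp k3).
split.
  by exists c; split => //; rewrite Sc divM_le //; nra.
move=> Hd; have := Hd _ GSc; rewrite Sc divM_le // => H.
have X k : exists v : nat, [/\ (v <= 4)%N, p k = v%:R & (v %% 4 = 0)%N].
  have : (p k - 2) ^+ 2 = 4.
    by case: (ord4P k) => ->; nra.
  have [ak bk] := andP (Hp k) => E.
  have : p k = 0 \/ p k = 4 by nra.
  by case=> ->; [exists 0%N | exists 4%N].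
have [v Hv] := choice X.
exists v; split; first by move=> k; have [] := Hv k.
split; last by apply: Gpt_p => // k; have [] := Hv k.
have [_ _ e0] := Hv k0; have [_ _ e1] := Hv k1.
have [_ _ e2] := Hv k2; have [_ _ e3] := Hv k3.
by rewrite /cl /F0 e0 e1 e2 e3.
Qed.

Definition T (M : nat) := ('I_M.+1 * 'I_M.+1 * 'I_M.+1 * 'I_M.+1)%type.
Definition tov M (w : T M) : 'I_4 -> nat := fun k =>
  match nat_of_ord k with 0 => w.1.1.1 | 1 => w.1.1.2 | 2 => w.1.2 | _ => w.2 end.
Arguments tov {M}.
Definition SS M F : {set T M} := [set w | cl (tov w) F].
Definition hh M F (t : 'I_#|SS M F|) : pt R := Gpt M (tov (enum_val t)).

Lemma tov_inj M : injective (@tov M).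
Proof.
move=> [[[a b] c] d] [[[a' b'] c'] d'] E.
have := congr1 (fun f => f k0) E; have := congr1 (fun f => f k1) E.
have := congr1 (fun f => f k2) E; have := congr1 (fun f => f k3) E.
by rewrite /tov /= => /val_inj -> /val_inj -> /val_inj -> /val_inj ->.
Qed.

Lemma Gpt_inj M v v' : (0 < M)%N -> Gpt M v = Gpt M v' -> v = v'.
Proof.
move=> M0 E; apply: funext => k; have := congr1 (fun f => f k) E.
rewrite /Gpt => /(congr1 (fun z => z * M%:R)).
rewrite !divfK ?pnatr_eq0 -?lt0n // => /eqP; rewrite eqr_nat => /eqP.
done.
Qed.

Lemma tov_le M (w : T M) k : (tov w k <= M)%N.
Proof.
by rewrite /tov; case: (nat_of_ord k) => [|[|[|]]] /=; rewrite -ltnS ltn_ord.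
Qed.

Lemma hh_inj M F : (0 < M)%N -> injective (@hh M F).
Proof. by move=> M0 t t' /(Gpt_inj _ _ _ M0) /(tov_inj _) /enum_val_inj. Qed.

Lemma hh_range M F y : (exists t, hh M F t = y) <-> GS M F y.
Proof.
split.
  move=> [t <-]; exists (tov (enum_val t)); split; first exact: tov_le.
  by split => //; have := enum_valP t; rewrite inE.
move=> [v [Hv [Fv ->]]].
pose w : T M := (inord (v k0), inord (v k1), inord (v k2), inord (v k3)).
have Ew : tov w = v.
  apply: funext => k; rewrite /tov /w /=.
  by case: (ord4P k) => -> /=; rewrite inordK // ltnS.
have Hw : w \in SS M F by rewrite inE Ew.
exists (enum_rank_in Hw w); rewrite /hh enum_rankK_in //.
by rewrite Ew.
Qed.

Lemma hh_GS M F t : GS M F (hh M F t).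
Proof. by apply/hh_range; exists t. Qed.

Lemma hh_ne M F (t t' : 'I_#|SS M F|) : t <> t' -> exists k, tov (enum_val t) k != tov (enum_val t') k.
Proof.
move=> Ne; apply: contrapT => H; apply: Ne; apply: enum_val_inj; apply: tov_inj.
apply: funext => k; apply/eqP; apply: contrapT => /negP Hk; apply: H; by exists k.
Qed.

Definition s1 (N : nat) (g : nat -> nat) : nat := (N.+1 * g 0 + N * (g 1 + g 2 + g 3))%N.

Lemma cls_sum N (g : nat -> nat) : (\sum_(i < (4 * N).+1) g (i %% 4) = s1 N g)%N.
Proof.
rewrite /s1; elim: N => [|N IH].
  by rewrite big_ord_recr big_ord0 /= mod0n; ring.
have -> : ((4 * N.+1).+1 = ((4 * N).+1).+4)%N by clear; lia.
rewrite -(big_mkord xpredT (fun i => g (i %% 4)%N)).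
rewrite big_nat_recr // big_nat_recr // big_nat_recr // big_nat_recr // big_mkord IH.
have -> : ((4 * N).+1 %% 4 = 1)%N by clear; lia.
have -> : ((4 * N).+2 %% 4 = 2)%N by clear; lia.
have -> : ((4 * N).+3 %% 4 = 3)%N by clear; lia.
have -> : ((4 * N).+4 %% 4 = 0)%N by clear; lia.
rewrite /= !mulSn; clear; lia.
Qed.

Lemma sum_pair (I J : finType) (G : I * J -> nat) :
  (\sum_(p : I * J) G p = \sum_(i : I) \sum_(j : J) G (i, j))%N.
Proof. by rewrite pair_bigA; apply: eq_bigr => -[i j]. Qed.

Definition cntF N (F : nat -> nat -> nat -> nat -> bool) : nat :=
  s1 N (fun a => s1 N (fun b => s1 N (fun c => s1 N (fun d => F a b c d)))).

Lemma card_SS N F : #|SS (4 * N) F| = cntF N F.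
Proof.
rewrite -sum1_card big_mkcond /=.
rewrite (eq_bigr (fun w : T (4 * N) => nat_of_bool (cl (tov w) F))); last first.
  by move=> w _; rewrite inE; case: (cl _ _).
rewrite sum_pair sum_pair sum_pair /cl /tov /=.
under eq_bigr => a _ do under eq_bigr => b _ do under eq_bigr => c _ do
  rewrite (cls_sum N (fun x => nat_of_bool (F (a %% 4) (b %% 4) (c %% 4) x)))%N.
under eq_bigr => a _ do under eq_bigr => b _ do
  rewrite (cls_sum N (fun y => s1 N (fun x => nat_of_bool (F (a %% 4) (b %% 4) y x))))%N.
under eq_bigr => a _ do
  rewrite (cls_sum N (fun z => s1 N (fun y => s1 N (fun x => nat_of_bool (F (a %% 4) z y x)))))%N.
by rewrite (cls_sum N (fun t => s1 N (fun z => s1 N (fun y => s1 N (fun x => nat_of_bool (F t z y x))))))%N.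
Qed.

Lemma cntD N : cntF N FD = (6 * N ^ 2 * (N + 1) ^ 2)%N.
Proof. rewrite /cntF /s1 /FD /ev /c2 /= ?muln0 ?addn0 ?add0n ?muln1 ?addn0.
nia. Qed.

Lemma cntE N : cntF N FE = (4 * N * (N + 1) ^ 3 + 4 * N ^ 3 * (N + 1) + 16 * N ^ 4)%N.
Proof. rewrite /cntF /s1 /FE /ev /od /c2 /= ?muln0 ?addn0 ?add0n ?muln1 ?addn0.
Time nia. Qed.

Lemma cnt0 : cntF 1 F0 = 16%N.
Proof. Time by rewrite /cntF /s1 /F0 /=. Qed.

Lemma disjP F F' v : disj F F' -> cl v F -> cl v F' -> False.
Proof.
move=> /(clP _ v) H a b; rewrite /cl /= in a b H.
by move: H; rewrite a b.
Qed.

Lemma phase_GS x k M FB FH (rho : nat) (r : R) :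
  greedy_seq x -> (1 <= k)%N -> (0 < M)%N -> 0 < r -> r ^+ 2 = rho%:R / (M%:R) ^+ 2 ->
  (forall y, GS M FB y <-> exists i, (1 <= i <= k)%N /\ x i = y) ->
  (forall i j, (1 <= i <= k)%N -> (1 <= j <= k)%N -> i <> j -> r <= dist2 (x i) (x j)) ->
  sepcheck FH FB rho -> sepcheck FH FH rho -> disj FH FB ->
  (forall y, cube y -> (exists b, GS M FB b /\ sqd y b <= rho%:R / (M%:R) ^+ 2) /\
       ((forall b, GS M FB b -> rho%:R / (M%:R) ^+ 2 <= sqd y b) -> GS M FH y)) ->
  forall j, (j <= #|SS M FH|)%N ->
   [/\ forall i, (k < i <= k + j)%N -> exists t, x i = hh M FH t,
       forall i i', (1 <= i <= k+j)%N -> (1 <= i' <= k+j)%N -> i <> i' -> r <= dist2 (x i) (x i'),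
       (j < #|SS M FH|)%N -> CR x (k+j) = r,
       (0 < j)%N -> SR x (k+j) = r/2 &
       j = #|SS M FH| -> forall y, (GS M FB y \/ exists t, hh M FH t = y) <->
             exists i, (1 <= i <= k + #|SS M FH|)%N /\ x i = y].
Proof.
move=> Hg Hk M0 r0 Hr HB Hsep S1 S2 Dj Cov.
have M2 : 0 < (M%:R : R) ^+ 2 by rewrite exprn_gt0 // ltr0n.
have r0' : 0 <= r by apply: ltW.
apply: phase => //.
- exact: hh_inj.
- move=> t b [v' [_ [Fv' ->]]].
  have Fv : cl (tov (enum_val t)) FH by have := enum_valP t; rewrite inE.
  rewrite /hh; apply: dist_ge => //; rewrite Hr sqd_GG // divM_le //.
  apply: (sep_ok _ _ _ _ _ S1 Fv Fv'); apply: contrapT => Hn.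
  have E : tov (enum_val t) = v'.
    apply: funext => k'; apply/eqP; apply: contrapT => /negP Hk'; apply: Hn; by exists k'.
  by apply: (disjP _ _ _ Dj Fv); rewrite E.
- move=> t t' Ne.
  have Fv : cl (tov (enum_val t)) FH by have := enum_valP t; rewrite inE.
  have Fv' : cl (tov (enum_val t')) FH by have := enum_valP t'; rewrite inE.
  rewrite /hh; apply: dist_ge => //; rewrite Hr sqd_GG // divM_le //.
  exact: (sep_ok _ _ _ _ _ S2 Fv Fv' (hh_ne _ _ _ _ Ne)).
- move=> y cy; have [[b [Bb Sb]] _] := Cov y cy.
  by exists b; split => //; apply: dist_le => //; rewrite Hr.
- move=> y cy H; apply/hh_range; apply: (proj2 (Cov y cy)) => b Bb.
  by rewrite -Hr; apply: dist_ge_inv => //; exact: H.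
- by move=> t; apply: (GS_cube _ _ _ M0); exact: hh_GS.
Qed.

Definition Mm (m : nat) : nat := (4 * 2 ^ m)%N.
Definition rD (m : nat) : R := gamma R m * Num.sqrt 2 / 2.
Definition rE (m : nat) : R := gamma R m / 2.

Lemma gamma_gt0 m : 0 < gamma R m.
Proof. by rewrite /gamma invr_gt0 exprn_gt0. Qed.

Lemma gamma_neq0 m : gamma R m != 0.
Proof. by rewrite gt_eqF // gamma_gt0. Qed.

Lemma gammaS m : gamma R m.+1 = gamma R m / 2.
Proof. by rewrite /gamma exprS invfM mulrC. Qed.

Lemma Mm_R m : ((Mm m)%:R : R) = 4 / gamma R m.
Proof. by rewrite /Mm /gamma invrK natrM natrX. Qed.

Lemma s2 : (Num.sqrt 2 : R) ^+ 2 = 2.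
Proof. by rewrite sqr_sqrtr // ler0n. Qed.

Lemma s_gt0 : (0 : R) < Num.sqrt 2.
Proof. by rewrite sqrtr_gt0 ltr0n. Qed.

Lemma s_bounds : (1 : R) <= Num.sqrt (2 : R) <= 2.
Proof. have := s2; have := s_gt0; rewrite expr2 => H1 H2; apply/andP; split; nra. Qed.

Lemma rD_gt0 m : 0 < rD m.
Proof. by rewrite /rD divr_gt0 // mulr_gt0 // ?gamma_gt0 ?s_gt0. Qed.

Lemma rE_gt0 m : 0 < rE m.
Proof. by rewrite /rE divr_gt0 // gamma_gt0. Qed.

Lemma rD2 m : rD m ^+ 2 = 8%:R / ((Mm m)%:R) ^+ 2.
Proof.
rewrite Mm_R /rD; have g0 := gamma_neq0 m.
have -> : (gamma R m * Num.sqrt 2 / 2) ^+ 2 = gamma R m ^+ 2 * (Num.sqrt 2) ^+ 2 / 4.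
  by field.
by rewrite s2; field.
Qed.

Lemma rE2 m : rE m ^+ 2 = 4%:R / ((Mm m)%:R) ^+ 2.
Proof. by rewrite Mm_R /rE; have g0 := gamma_neq0 m; field. Qed.

Lemma rE_le_rD m : rE m <= rD m.
Proof.
rewrite /rE /rD; have g := gamma_gt0 m; have [s _] := andP s_bounds.
nra.
Qed.

Lemma rD_le_rE m : rD m.+1 <= rE m.
Proof.
rewrite /rE /rD gammaS; have g := gamma_gt0 m; have [_ s] := andP s_bounds.
nra.
Qed.

Lemma eq_half_s (g : R) : g * Num.sqrt 2 / 2 / 2 = g / (2 * Num.sqrt 2).
Proof.
have s0 : Num.sqrt 2 != 0 :> R by rewrite gt_eqF // s_gt0.
have -> : g / (2 * Num.sqrt 2) = g * Num.sqrt 2 / (2 * Num.sqrt 2 ^+ 2) by field.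
by rewrite s2; field.
Qed.

Lemma GS_orP M F G y :
  GS M (fun a b c d => F a b c d || G a b c d) y <-> GS M F y \/ GS M G y.
Proof.
split.
  by move=> [v [Hv [/orP [Fv|Gv] ->]]]; [left|right]; exists v.
move=> [[v [Hv [Fv ->]]]|[v [Hv [Gv ->]]]].
  by exists v; split => //; split => //; rewrite /cl /=; apply/orP; left.
by exists v; split => //; split => //; rewrite /cl /=; apply/orP; right.
Qed.

Lemma chkT : chk4 (fun a b c d =>
  FA (2 * (a %% 2)) (2 * (b %% 2)) (2 * (c %% 2)) (2 * (d %% 2)) == (FAD a b c d || FE a b c d)).
Proof. by vm_compute. Qed.

Lemma chkFAev : chk4 (fun a b c d => FA a b c d ==> ev a b c d).
Proof. by vm_compute. Qed.

Lemma trans_GS m y : GS (Mm m.+1) FA y <-> GS (Mm m) FAD y \/ GS (Mm m) FE y.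
Proof.
have MS : Mm m.+1 = (2 * Mm m)%N by rewrite /Mm expnS; clear; lia.
have M0 : (0 < Mm m)%N by rewrite /Mm muln_gt0 expn_gt0.
have HM : ((Mm m)%:R : R) != 0 by rewrite pnatr_eq0 -lt0n.
have Ecl v : cl (fun k => 2 * v k)%N FA = cl v FAD || cl v FE.
  have C := clP _ v chkT; rewrite /cl.
  have E k : ((2 * v k) %% 4 = 2 * (v k %% 4 %% 2))%N by clear; lia.
  by rewrite !E; apply/eqP.
have EG v : Gpt (Mm m.+1) (fun k => 2 * v k)%N = Gpt (Mm m) v.
  apply: funext => k; rewrite /Gpt MS !natrM; field.
  by rewrite pnatr_eq0 -lt0n expn_gt0.
split.
  move=> [v' [Hv' [Fv' ->]]].
  have ev' : ev (v' k0 %% 4) (v' k1 %% 4) (v' k2 %% 4) (v' k3 %% 4).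
    by have := clP _ v' chkFAev => /implyP; apply.
  move: ev'; rewrite /ev => /and4P [e0 e1 e2 e3].
  have Ev k : v' k = (2 * (v' k %/ 2))%N.
    by case: (ord4P k) => ->; [move: e0|move: e1|move: e2|move: e3]; clear; lia.
  have Hv : v' = fun k => (2 * (v' k %/ 2))%N by apply: funext => k; exact: Ev.
  rewrite Hv EG; apply/GS_orP; exists (fun k => v' k %/ 2)%N; split.
    by move=> k; have := Hv' k; rewrite MS; clear; lia.
  by split => //; move: Fv'; rewrite {1}Hv Ecl => H; exact: H.
move/GS_orP => [v [Hv [Fv ->]]].
rewrite -EG; exists (fun k => 2 * v k)%N; split.
  by move=> k; have := Hv k; rewrite MS; clear; lia.
by split => //; rewrite Ecl; exact: Fv.
Qed.

Definition Inv (x : nat -> pt R) (m : nat) :=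
  [/\ forall y, GS (Mm m) FA y <-> exists i, (1 <= i <= n_ m)%N /\ x i = y,
      forall i j, (1 <= i <= n_ m)%N -> (1 <= j <= n_ m)%N -> i <> j -> rD m <= dist2 (x i) (x j)
    & SR x (n_ m) = gamma R m / 2].

Lemma centreE : centre R = Gpt 4 (fun _ => 2%N).
Proof. by apply: funext => k; rewrite /centre /Gpt; field. Qed.

Lemma inv0 x : greedy_seq x -> Inv x 0.
Proof.
move=> Hg.
have C16 : #|SS 4 F0| = 16%N by rewrite (card_SS 1 F0) cnt0.
have Hr : (1 : R) ^+ 2 = 16%:R / (4%:R) ^+ 2 by rewrite expr1n; field.
have HB y : GS 4 F2 y <-> exists i, (1 <= i <= 1)%N /\ x i = y.
  split.
    move=> [v [Hv [Fv ->]]]; exists 1%N; split => //; rewrite Hg.1 centreE.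
    congr Gpt; apply: funext => k; move: Fv; rewrite /cl /F2 => /and4P [e0 e1 e2 e3].
    by case: (ord4P k) => ->; [move: e0 (Hv k0)|move: e1 (Hv k1)|move: e2 (Hv k2)|move: e3 (Hv k3)]; clear; lia.
  move=> [i [Hi <-]]; have -> : i = 1%N by move: Hi; clear; lia.
  by rewrite Hg.1 centreE; exists (fun _ => 2%N).
have Hs i j : (1 <= i <= 1)%N -> (1 <= j <= 1)%N -> i <> j -> (1 : R) <= dist2 (x i) (x j).
  by move=> Hi Hj Hij; exfalso; move: Hi Hj Hij; clear; lia.
have [c1 c2 c3 c4 [c5 c6]] := checks; have [d1 d2 d3] := checks2.
have P := phase_GS _ _ _ _ _ _ _ Hg (isT : (1 <= 1)%N) (isT : (0 < 4)%N) ltr01 Hr HB Hs c1 c2 d1 cover0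
  _ (leqnn #|SS 4 F0|).
case: P => _ Pb _ Pd Pe.
have nE : (1 + #|SS 4 F0| = n_ 0)%N by rewrite C16.
rewrite /Inv -nE; split.
- move=> y; rewrite -(Pe erefl y); split.
    by move/GS_orP => [H|H]; [right; apply/hh_range | left].
  by move=> [H|/hh_range H]; apply/GS_orP; [right|left].
- move=> i j Hi Hj Hij; apply: le_trans (Pb i j Hi Hj Hij).
  rewrite /rD /gamma expr0 invr1 mul1r; have [_ s] := andP s_bounds; lra.
- by rewrite Pd ?C16 // /gamma expr0 invr1.
Qed.

Lemma s_neq0 : Num.sqrt 2 != 0 :> R.
Proof. by rewrite gt_eqF // s_gt0. Qed.

Lemma level x m : greedy_seq x -> Inv x m ->
  [/\ (SR x (n_ m) = gamma R m / 2 /\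
       CR x (n_ m) = gamma R m * Num.sqrt 2 / 2 /\
       MR x (n_ m) = Num.sqrt 2),
      (forall n, (n_ m < n < n_ m + l_ m)%N ->
         SR x n = gamma R m / (2 * Num.sqrt 2) /\
         CR x n = gamma R m * Num.sqrt 2 / 2 /\
         MR x n = 2),
      (SR x (n_ m + l_ m) = gamma R m / (2 * Num.sqrt 2) /\
       CR x (n_ m + l_ m) = gamma R m / 2 /\
       MR x (n_ m + l_ m) = Num.sqrt 2),
      (forall n, (n_ m + l_ m < n < n_ m.+1)%N ->
         SR x n = gamma R m / 4 /\
         CR x n = gamma R m / 2 /\
         MR x n = 2)
    & Inv x m.+1].
Proof.
move=> Hg [HB Hs Hsr].
have g0 := gamma_neq0 m; have sn0 := s_neq0.
set N := (2 ^ m)%N.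
have N0 : (0 < N)%N by rewrite expn_gt0.
have MmE : Mm m = (4 * N)%N by [].
have M0 : (0 < Mm m)%N by rewrite MmE; move: N0; clear; lia.
have E2 : (2 ^ (2 * m) = N ^ 2)%N by rewrite /N -expnM mulnC.
have E4 : (2 ^ (4 * m) = N ^ 4)%N by rewrite /N -expnM mulnC.
have E4S : (2 ^ (4 * m.+1) = 16 * N ^ 4)%N by rewrite mulnS expnD -E4.
have ES : (2 ^ m.+1 = 2 * N)%N by rewrite expnS.
have nm1 : (1 <= n_ m)%N.
  rewrite /n_ -/N; have : (0 < (N + 1) ^ 4)%N by rewrite expn_gt0 addn1.
  by clear; lia.
have cD : #|SS (Mm m) FD| = l_ m.
  by rewrite MmE card_SS cntD /l_ E2 -/N.
have cE : (n_ m + #|SS (Mm m) FD| + #|SS (Mm m) FE| = n_ m.+1)%N.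
  rewrite cD MmE card_SS cntE /l_ /n_ E2 E4 E4S ES -/N.
  ring.
have LD0 : (0 < #|SS (Mm m) FD|)%N.
  by rewrite cD /l_ !muln_gt0 !expn_gt0 addn1.
have LE0 : (0 < #|SS (Mm m) FE|)%N.
  rewrite MmE card_SS cntE -/N; have : (0 < 16 * N ^ 4)%N by rewrite muln_gt0 expn_gt0 N0.
  by clear; lia.
have [c1 c2 c3 c4 [c5 c6]] := checks; have [d1 d2 d3] := checks2.
set LD := #|SS (Mm m) FD|; set LE := #|SS (Mm m) FE|.
have PD := phase_GS _ _ _ _ _ _ _ Hg nm1 M0 (rD_gt0 m) (rD2 m) HB Hs c3 c4 d2
  (fun y cy => coverD N y N0 cy).
have [_ PDb _ PDd PDe] := PD _ (leqnn LD).
have [_ _ PD0c _ _] := PD 0%N (leq0n _).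
have HBE y : GS (Mm m) FAD y <-> exists i, (1 <= i <= n_ m + LD)%N /\ x i = y.
  rewrite -(PDe erefl y); split.
    by move/GS_orP => [H|H]; [left | right; apply/hh_range].
  by move=> [H|/hh_range H]; apply/GS_orP; [left|right].
have HsE i j : (1 <= i <= n_ m + LD)%N -> (1 <= j <= n_ m + LD)%N -> i <> j ->
    rE m <= dist2 (x i) (x j).
  by move=> Hi Hj Hij; apply: le_trans (rE_le_rD m) (PDb i j Hi Hj Hij).
have nm2 : (1 <= n_ m + LD)%N by move: nm1; clear; lia.
have PE := phase_GS _ _ _ _ _ _ _ Hg nm2 M0 (rE_gt0 m) (rE2 m) HBE HsE c5 c6 d3
  (fun y cy => coverE N y N0 cy).
have [_ PEb _ PEd PEe] := PE _ (leqnn LE).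
have [_ _ PE0c _ _] := PE 0%N (leq0n _).
have C1 : CR x (n_ m) = rD m by have := PD0c LD0; rewrite addn0.
have C3 : CR x (n_ m + LD) = rE m by have := PE0c LE0; rewrite addn0.
rewrite -cD; split.
- split => //; split; first by rewrite C1.
  by rewrite /MR C1 Hsr /rD; field.
- move=> n /andP [H1 H2]; set j := (n - n_ m)%N.
  have nE : n = (n_ m + j)%N by rewrite /j; move: H1 H2; clear; lia.
  have jL : (j <= LD)%N by rewrite /j; move: H1 H2; clear; lia.
  have [_ _ Pc Pd _] := PD j jL.
  have Cn : CR x n = rD m by rewrite nE Pc // /j; move: H1 H2; clear; lia.
  have Sn : SR x n = rD m / 2 by rewrite nE Pd // /j; move: H1 H2; clear; lia.
  have r0 : rD m != 0 by rewrite gt_eqF // rD_gt0.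
  split; first by rewrite Sn /rD eq_half_s.
  split => //; rewrite /MR Cn Sn; by field.
- have S3 : SR x (n_ m + LD) = rD m / 2 by rewrite PDd.
  split; first by rewrite S3 /rD eq_half_s.
  split; first by rewrite C3.
  rewrite /MR C3 S3.
  have -> : rE m / (rD m / 2) = 2 / Num.sqrt 2.
    by rewrite /rE /rD; field; rewrite sn0 g0.
  by rewrite -{1}s2 expr2 mulfK.
- move=> n /andP [H1 H2]; set j := (n - (n_ m + LD))%N.
  have nE : n = (n_ m + LD + j)%N by rewrite /j; move: H1 H2; clear; lia.
  have jL : (j <= LE)%N by rewrite /j; move: H1 H2 cE; clear; lia.
  have [_ _ Pc Pd _] := PE j jL.
  have Cn : CR x n = rE m by rewrite nE Pc // /j; move: H1 H2 cE; clear; lia.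
  have Sn : SR x n = rE m / 2 by rewrite nE Pd // /j; move: H1 H2; clear; lia.
  rewrite /MR Cn Sn /rE; split; first by field.
  by split => //; field.
- rewrite /Inv -cE; split.
  + move=> y; rewrite trans_GS -(PEe erefl y); split.
      by move=> [H|/hh_range H]; [left|right].
    by move=> [H|/hh_range H]; [left|right].
  + move=> i j Hi Hj Hij; apply: le_trans (rD_le_rE m) (PEb i j Hi Hj Hij).
  + by rewrite PEd // gammaS /rE; field.
Qed.

End Geo.

Theorem theorem4 (R : realType) (x : nat -> pt R) (m : nat) :
  greedy_seq x ->
  [/\ (SR x (n_ m) = gamma R m / 2 /\
       CR x (n_ m) = gamma R m * Num.sqrt 2 / 2 /\
       MR x (n_ m) = Num.sqrt 2),
      (forall n, (n_ m < n < n_ m + l_ m)%N ->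
         SR x n = gamma R m / (2 * Num.sqrt 2) /\
         CR x n = gamma R m * Num.sqrt 2 / 2 /\
         MR x n = 2),
      (SR x (n_ m + l_ m) = gamma R m / (2 * Num.sqrt 2) /\
       CR x (n_ m + l_ m) = gamma R m / 2 /\
       MR x (n_ m + l_ m) = Num.sqrt 2)
    & (forall n, (n_ m + l_ m < n < n_ m.+1)%N ->
         SR x n = gamma R m / 4 /\
         CR x n = gamma R m / 2 /\
         MR x n = 2)].
Proof.
move=> Hg.
have I : Inv R x m.
  elim: m => [|m IH]; first exact: inv0.
  by have [_ _ _ _ ?] := level R x m Hg IH.
by have [? ? ? ? _] := level R x m Hg I.
Qed.
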